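(* Let $(A,\circ,[\cdot,\cdot])$ be a finite-dimensional dual pre-Poisson algebra and $(V;l_\circ,r_\circ,l_{[\cdot,\cdot]},r_{[\cdot,\cdot]})$ a finite-dimensional representation of it. Let $\hat A=A\oplus V^*$ with the dual pre-Poisson algebra structure $(x+u^* )\circ(y+v^* )=x\circ y-l_\circ^*(x)v^*+(-l_\circ^*+r_\circ^* )(y)u^*$, $[x+u^*,y+v^*]=[x,y]+l_{[\cdot,\cdot]}^*(x)v^*-(l_{[\cdot,\cdot]}^*+r_{[\cdot,\cdot]}^* )(y)u^*$. Let $T:V\to A$ be linear, identified with an element of $A\otimes V^*\subseteq\hat A\otimes\hat A$ via $\mathrm{Hom}(V,A)\cong A\otimes V^*$. Then $r=T+\tau(T)$ is a solution of the permutative-Leibniz Yang–Baxter equation in $\hat A$ if and only if $T$ is an $\mathcal{O}$-operator on $(A,\circ,[\cdot,\cdot])$ associated to $(V;l_\circ,r_\circ,l_{[\cdot,\cdot]},r_{[\cdot,\cdot]})$.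
   Context: Field $\mathbb{F}$ of characteristic $0$. $\tau$ is the flip $u\otimes v\mapsto v\otimes u$; for $f:A\to\mathrm{End}(V)$, $\langle f^*(x)v^*,u\rangle=-\langle v^*,f(x)u\rangle$; the identification sends $T$ to $\sum_k T(v_k)\otimes v_k^*$ for a basis $\{v_k\}$ of $V$ with dual basis $\{v_k^*\}$. Dual pre-Poisson algebra: $x\circ(y\circ z)=(x\circ y)\circ z=(y\circ x)\circ z$; $[x,[y,z]]=[[x,y],z]+[y,[x,z]]$; $[x,y\circ z]=[x,y]\circ z+y\circ[x,z]$; $[x\circ y,z]=x\circ[y,z]+y\circ[x,z]$; $[x,y]\circ z=-[y,x]\circ z$. A representation $(V;l_\circ,r_\circ,l_{[\cdot,\cdot]},r_{[\cdot,\cdot]})$: linear maps $A\to\mathrm{End}(V)$ with, for all $x,y$: $r_\circ(x)r_\circ(y)=r_\circ(y\circ x)=l_\circ(y)r_\circ(x)=r_\circ(x)l_\circ(y)$; $l_\circ(x\circ y)=l_\circ(x)l_\circ(y)=l_\circ(y)l_\circ(x)$; $l_{[\cdot,\cdot]}([x,y])=l_{[\cdot,\cdot]}(x)l_{[\cdot,\cdot]}(y)-l_{[\cdot,\cdot]}(y)l_{[\cdot,\cdot]}(x)$; $r_{[\cdot,\cdot]}([x,y])=r_{[\cdot,\cdot]}(y)r_{[\cdot,\cdot]}(x)+l_{[\cdot,\cdot]}(x)r_{[\cdot,\cdot]}(y)$; $r_{[\cdot,\cdot]}(x)r_{[\cdot,\cdot]}(y)=-r_{[\cdot,\cdot]}(x)l_{[\cdot,\cdot]}(y)$;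 $r_{[\cdot,\cdot]}(x\circ y)=r_\circ(y)r_{[\cdot,\cdot]}(x)+l_\circ(x)r_{[\cdot,\cdot]}(y)$; $l_{[\cdot,\cdot]}(x)r_\circ(y)=r_\circ(y)l_{[\cdot,\cdot]}(x)+r_\circ([x,y])$; $l_{[\cdot,\cdot]}(x)l_\circ(y)=l_\circ([x,y])+l_\circ(y)l_{[\cdot,\cdot]}(x)$; $r_{[\cdot,\cdot]}(x)r_\circ(y)=r_\circ([y,x])+l_\circ(y)r_{[\cdot,\cdot]}(x)$; $l_{[\cdot,\cdot]}(x\circ y)=l_\circ(x)l_{[\cdot,\cdot]}(y)+l_\circ(y)l_{[\cdot,\cdot]}(x)$; $r_{[\cdot,\cdot]}(x)(l_\circ-r_\circ)(y)=0$; $r_\circ(x)(l_{[\cdot,\cdot]}+r_{[\cdot,\cdot]})(y)=0$; $l_\circ([x,y]+[y,x])=0$. An $\mathcal{O}$-operator associated to it is a linear $T:V\to A$ with $T(u)\circ T(v)=T(l_\circ(T(u))v+r_\circ(T(v))u)$ and $[T(u),T(v)]=T(l_{[\cdot,\cdot]}(T(u))v+r_{[\cdot,\cdot]}(T(v))u)$. PLYBE in a dual pre-Poisson algebra $B$: with $x\blacksquare y=x\circ y-y\circ x$, $x\square y=[x,y]+[y,x]$ and $r=\sum_i a_i\otimes b_i\in B\otimes B$, $\mathbf{P}(r)=\sum_{i,j}\big(a_i\otimes a_j\otimes b_i\circ b_j-a_i\otimes b_i\circ a_j\otimes b_j+a_i\blacksquare a_j\otimes b_j\otimes b_i\big)$,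 $\mathbf{L}(r)=\sum_{i,j}\big(a_i\otimes a_j\otimes[b_i,b_j]+a_i\otimes[b_i,a_j]\otimes b_j-a_i\square a_j\otimes b_i\otimes b_j\big)$; $r$ is a solution if $\mathbf{P}(r)=\mathbf{L}(r)=0$. *)

(* Defs.v *)
(* Coordinate model:
   A   = 'rV[F]_n  (row vectors, dim n)
   V   = 'cV[F]_m  (column vectors, dim m), basis v_k = delta_mx k 0
   V^* = 'rV[F]_m, dual basis v_k^* = delta_mx 0 k, pairing <f,u> = f *m u
   End(V) = 'M[F]_m acting on the left of column vectors.
   Ahat = A (+) V^* = 'rV[F]_(n+m) via row_mx.
   Tensors in Ahat^{(x)2} are matrices 'M_(n+m) (a (x) b = a^T *m b),
   tensors in Ahat^{(x)3} are given by their coordinates (i,j,k). *)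
From HB Require Import structures.
From mathcomp Require Import all_boot all_order all_algebra.
Set Implicit Arguments.
Unset Strict Implicit.
Unset Printing Implicit Defensive.
Import GRing.Theory.
Local Open Scope ring_scope.

Definition bilinear_op (F : fieldType) (d : nat)
  (op : 'rV[F]_d -> 'rV[F]_d -> 'rV[F]_d) : Prop :=
  (forall (a : F) x y z, op (a *: x + y) z = a *: op x z + op y z) /\
  (forall (a : F) x y z, op z (a *: x + y) = a *: op z x + op z y).

Definition dual_prePoisson (F : fieldType) (n : nat)
  (circ br : 'rV[F]_n -> 'rV[F]_n -> 'rV[F]_n) : Prop :=
  bilinear_op circ /\ bilinear_op br /\
  forall x y z,
    circ x (circ y z) = circ (circ x y) z /\
    circ (circ x y) z = circ (circ y x) z /\
    br x (br y z) = br (br x y) z + br y (br x z) /\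
    br x (circ y z) = circ (br x y) z + circ y (br x z) /\
    br (circ x y) z = circ x (br y z) + circ y (br x z) /\
    circ (br x y) z = - circ (br y x) z.

Definition linear_in (F : fieldType) (n m : nat) (f : 'rV[F]_n -> 'M[F]_m) : Prop :=
  forall (a : F) x y, f (a *: x + y) = a *: f x + f y.

Definition is_rep (F : fieldType) (n m : nat)
  (circ br : 'rV[F]_n -> 'rV[F]_n -> 'rV[F]_n)
  (lc rc lb rb : 'rV[F]_n -> 'M[F]_m) : Prop :=
  [/\ linear_in lc, linear_in rc, linear_in lb & linear_in rb] /\
  forall x y,
    rc x *m rc y = rc (circ y x) /\
    rc (circ y x) = lc y *m rc x /\
    lc y *m rc x = rc x *m lc y /\
    lc (circ x y) = lc x *m lc y /\
    lc x *m lc y = lc y *m lc x /\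
    lb (br x y) = lb x *m lb y - lb y *m lb x /\
    rb (br x y) = rb y *m rb x + lb x *m rb y /\
    rb x *m rb y = - (rb x *m lb y) /\
    rb (circ x y) = rc y *m rb x + lc x *m rb y /\
    lb x *m rc y = rc y *m lb x + rc (br x y) /\
    lb x *m lc y = lc (br x y) + lc y *m lb x /\
    rb x *m rc y = rc (br y x) + lc y *m rb x /\
    lb (circ x y) = lc x *m lb y + lc y *m lb x /\
    rb x *m (lc y - rc y) = 0 /\
    rc x *m (lb y + rb y) = 0 /\
    lc (br x y + br y x) = 0.

(* dual action: <f^*(x) v^*, u> = - <v^*, f(x) u> *)
Definition dual_act (F : fieldType) (n m : nat) (f : 'rV[F]_n -> 'M[F]_m)
  (x : 'rV[F]_n) (v : 'rV[F]_m) : 'rV[F]_m := - (v *m f x).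

Definition hat_circ (F : fieldType) (n m : nat)
  (circ : 'rV[F]_n -> 'rV[F]_n -> 'rV[F]_n) (lc rc : 'rV[F]_n -> 'M[F]_m)
  (X Y : 'rV[F]_(n + m)) : 'rV[F]_(n + m) :=
  let x := lsubmx X in let u := rsubmx X in
  let y := lsubmx Y in let v := rsubmx Y in
  row_mx (circ x y) (- dual_act lc x v + (- dual_act lc y u + dual_act rc y u)).

Definition hat_br (F : fieldType) (n m : nat)
  (br : 'rV[F]_n -> 'rV[F]_n -> 'rV[F]_n) (lb rb : 'rV[F]_n -> 'M[F]_m)
  (X Y : 'rV[F]_(n + m)) : 'rV[F]_(n + m) :=
  let x := lsubmx X in let u := rsubmx X in
  let y := lsubmx Y in let v := rsubmx Y in
  row_mx (br x y) (dual_act lb x v - (dual_act lb y u + dual_act rb y u)).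

Definition t3 (F : fieldType) (d : nat) (a b c : 'rV[F]_d) (i j k : 'I_d) : F :=
  a 0 i * b 0 j * c 0 k.

(* coordinates of P(r), L(r) for r = \sum_p a p (x) b p *)
Definition PLYBE_P (F : fieldType) (d : nat) (I : finType)
  (circ : 'rV[F]_d -> 'rV[F]_d -> 'rV[F]_d) (a b : I -> 'rV[F]_d)
  (i j k : 'I_d) : F :=
  \sum_(p : I) \sum_(q : I)
     (t3 (a p) (a q) (circ (b p) (b q)) i j k
      - t3 (a p) (circ (b p) (a q)) (b q) i j k
      + t3 (circ (a p) (a q) - circ (a q) (a p)) (b q) (b p) i j k).

Definition PLYBE_L (F : fieldType) (d : nat) (I : finType)
  (br : 'rV[F]_d -> 'rV[F]_d -> 'rV[F]_d) (a b : I -> 'rV[F]_d)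
  (i j k : 'I_d) : F :=
  \sum_(p : I) \sum_(q : I)
     (t3 (a p) (a q) (br (b p) (b q)) i j k
      + t3 (a p) (br (b p) (a q)) (b q) i j k
      - t3 (br (a p) (a q) + br (a q) (a p)) (b p) (b q) i j k).

(* r : 'M_d is the 2-tensor \sum_{p,q} r p q e_p (x) e_q = \sum_p e_p (x) row p r *)
Definition PLYBE_solution (F : fieldType) (d : nat)
  (circ br : 'rV[F]_d -> 'rV[F]_d -> 'rV[F]_d) (r : 'M[F]_d) : Prop :=
  let a := fun p : 'I_d => (delta_mx 0 p : 'rV[F]_d) in
  let b := fun p : 'I_d => row p r in
  forall i j k, PLYBE_P circ a b i j k = 0 /\ PLYBE_L br a b i j k = 0.

Definition tensor2 (F : fieldType) (d : nat) (a b : 'rV[F]_d) : 'M[F]_d := a^T *m b.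

Definition T_tensor (F : fieldType) (n m : nat) (T : 'cV[F]_m -> 'rV[F]_n)
  : 'M[F]_(n + m) :=
  \sum_(k < m) tensor2 (row_mx (T (delta_mx k 0)) (0 : 'rV[F]_m))
                       (row_mx (0 : 'rV[F]_n) (delta_mx 0 k)).

Definition flip2 (F : fieldType) (d : nat) (t : 'M[F]_d) : 'M[F]_d := t^T.

Definition linear_map (F : fieldType) (n m : nat) (T : 'cV[F]_m -> 'rV[F]_n) : Prop :=
  forall (a : F) u v, T (a *: u + v) = a *: T u + T v.

Definition O_operator (F : fieldType) (n m : nat)
  (circ br : 'rV[F]_n -> 'rV[F]_n -> 'rV[F]_n)
  (lc rc lb rb : 'rV[F]_n -> 'M[F]_m) (T : 'cV[F]_m -> 'rV[F]_n) : Prop :=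
  forall u v,
    circ (T u) (T v) = T (lc (T u) *m v + rc (T v) *m u) /\
    br (T u) (T v) = T (lb (T u) *m v + rb (T v) *m u).

(* Main.v *)
Require Import Defs.
From HB Require Import structures.
From mathcomp Require Import all_boot all_order all_algebra ring.
Import GRing.Theory.
Local Open Scope ring_scope.

Set Implicit Arguments.
Unset Strict Implicit.

Definition lin (F : fieldType) (U W : lmodType F) (f : U -> W) :=
  forall a x y, f (a *: x + y) = a *: f x + f y.

Lemma lin0 (F : fieldType) (U W : lmodType F) (f : U -> W) : lin f -> f 0 = 0.
Proof. by move=> H; have := H (-1) 0 0; rewrite scaler0 addr0 scaleN1r addNr. Qed.

Lemma linD (F : fieldType) (U W : lmodType F) (f : U -> W) : lin f ->
  forall x y, f (x + y) = f x + f y.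
Proof. by move=> H x y; have := H 1 x y; rewrite !scale1r. Qed.

Lemma linZ (F : fieldType) (U W : lmodType F) (f : U -> W) : lin f ->
  forall a x, f (a *: x) = a *: f x.
Proof. by move=> H a x; have := H a x 0; rewrite addr0 (lin0 H) addr0. Qed.

Lemma linN (F : fieldType) (U W : lmodType F) (f : U -> W) : lin f ->
  forall x, f (- x) = - f x.
Proof. by move=> H x; rewrite -scaleN1r (linZ H) scaleN1r. Qed.

Lemma linB (F : fieldType) (U W : lmodType F) (f : U -> W) : lin f ->
  forall x y, f (x - y) = f x - f y.
Proof. by move=> H x y; rewrite (linD H) (linN H). Qed.

Lemma lin_sum (F : fieldType) (U W : lmodType F) (f : U -> W) : lin f ->
  forall (I : finType) (c : I -> F) (g : I -> U),
  f (\sum_i c i *: g i) = \sum_i c i *: f (g i).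
Proof.
move=> H I c g.
apply: (big_rec2 (fun x y => f x = y)); first exact: lin0 H.
by move=> i y1 y2 _ IH; rewrite H IH.
Qed.

Lemma sum_deltal (F : fieldType) d (f : 'I_d -> F) i :
  \sum_p (delta_mx 0 p : 'rV[F]_d) 0 i * f p = f i.
Proof.
rewrite (bigD1 i) //= mxE !eqxx /= mul1r big1 ?addr0 // => p pi.
by rewrite mxE /= eq_sym (negbTE pi) mul0r.
Qed.

Lemma sum_deltar (F : fieldType) d (f : 'I_d -> F) i :
  \sum_p f p * (delta_mx 0 p : 'rV[F]_d) 0 i = f i.
Proof.
rewrite -[RHS](sum_deltal f i); apply: eq_bigr => p _; exact: mulrC.
Qed.

Lemma rowr_sum (F : fieldType) d (r : 'M[F]_d) : r^T = r ->
  forall k, row k r = \sum_q r q k *: (delta_mx 0 q : 'rV[F]_d).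
Proof.
move=> Hs k; rewrite {1}[row k r]row_sum_delta; apply: eq_bigr => q _.
by rewrite mxE -{1}Hs mxE.
Qed.

Lemma expand1 (F : fieldType) d (op : 'rV[F]_d -> 'rV[F]_d -> 'rV[F]_d) (r : 'M[F]_d) :
  (forall z, lin (op z)) -> r^T = r ->
  forall x b i, op x (row b r) 0 i = \sum_q r q b * op x (delta_mx 0 q) 0 i.
Proof.
move=> H2 Hs x b i; rewrite (rowr_sum Hs) (lin_sum (H2 x)) summxE.
by apply: eq_bigr => q _; rewrite mxE.
Qed.

Lemma expand1l (F : fieldType) d (op : 'rV[F]_d -> 'rV[F]_d -> 'rV[F]_d) (r : 'M[F]_d) :
  (forall z, lin (op ^~ z)) -> r^T = r ->
  forall x b i, op (row b r) x 0 i = \sum_q r q b * op (delta_mx 0 q) x 0 i.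
Proof.
move=> H1 Hs x b i; rewrite (rowr_sum Hs) (lin_sum (H1 x)) summxE.
by apply: eq_bigr => q _; rewrite mxE.
Qed.

Lemma expand2 (F : fieldType) d (op : 'rV[F]_d -> 'rV[F]_d -> 'rV[F]_d) (r : 'M[F]_d) :
  (forall z, lin (op ^~ z)) -> (forall z, lin (op z)) -> r^T = r ->
  forall a b i, op (row a r) (row b r) 0 i =
   \sum_p \sum_q r p a * r q b * op (delta_mx 0 p) (delta_mx 0 q) 0 i.
Proof.
move=> H1 H2 Hs a b i; rewrite (expand1l H1 Hs); apply: eq_bigr => p _.
rewrite (expand1 H2 Hs) mulr_sumr; apply: eq_bigr => q _; ring.
Qed.

Lemma sum_delta2 (F : fieldType) d (f : 'I_d -> 'I_d -> F) i j :
  \sum_p \sum_q (delta_mx 0 p : 'rV[F]_d) 0 i * (delta_mx 0 q : 'rV[F]_d) 0 j * f p q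
  = f i j.
Proof.
rewrite (eq_bigr (fun p => (delta_mx 0 p : 'rV[F]_d) 0 i *
   \sum_q (delta_mx 0 q : 'rV[F]_d) 0 j * f p q)); last first.
  by move=> p _; rewrite mulr_sumr; apply: eq_bigr => q _; rewrite mulrA.
rewrite sum_deltal; exact: sum_deltal.
Qed.

Lemma split3a (F : fieldType) d (f g h : 'I_d -> 'I_d -> F) :
  \sum_p \sum_q (f p q - g p q + h p q) =
  \sum_p \sum_q f p q - \sum_p \sum_q g p q + \sum_p \sum_q h p q.
Proof.
rewrite -sumrB -big_split; apply: eq_bigr => p _.
by rewrite -sumrB -big_split.
Qed.

Lemma split3b (F : fieldType) d (f g h : 'I_d -> 'I_d -> F) :
  \sum_p \sum_q (f p q + g p q - h p q) =
  \sum_p \sum_q f p q + \sum_p \sum_q g p q - \sum_p \sum_q h p q.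
Proof.
rewrite -big_split -sumrB; apply: eq_bigr => p _.
by rewrite -big_split -sumrB.
Qed.

Lemma mid_term (F : fieldType) d (op : 'rV[F]_d -> 'rV[F]_d -> 'rV[F]_d) (r : 'M[F]_d) :
  (forall z, lin (op z)) -> r^T = r -> forall i j k,
  \sum_p \sum_q (delta_mx 0 p : 'rV[F]_d) 0 i * op (row p r) (delta_mx 0 q) 0 j * (row q r) 0 k
  = op (row i r) (row k r) 0 j.
Proof.
move=> H2 Hs i j k.
rewrite (eq_bigr (fun p => (delta_mx 0 p : 'rV[F]_d) 0 i *
   \sum_q op (row p r) (delta_mx 0 q) 0 j * (row q r) 0 k)); last first.
  by move=> p _; rewrite mulr_sumr; apply: eq_bigr => q _; rewrite mulrA.
rewrite sum_deltal (expand1 H2 Hs); apply: eq_bigr => q _; rewrite mxE; exact: mulrC.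
Qed.

Lemma Pform (F : fieldType) d (op : 'rV[F]_d -> 'rV[F]_d -> 'rV[F]_d) (r : 'M[F]_d) :
  (forall z, lin (op ^~ z)) -> (forall z, lin (op z)) -> r^T = r ->
  forall i j k, PLYBE_P op (fun p => delta_mx 0 p) (fun p => row p r) i j k =
   op (row i r) (row j r) 0 k - op (row i r) (row k r) 0 j
   + (op (row k r) (row j r) 0 i - op (row j r) (row k r) 0 i).
Proof.
move=> H1 H2 Hs i j k; rewrite /PLYBE_P /t3 split3a sum_delta2 (mid_term H2 Hs).
congr (_ + _).
rewrite (expand2 H1 H2 Hs k j) (expand2 H1 H2 Hs j k) [X in _ = _ - X]exchange_big /=.
rewrite -sumrB; apply: eq_bigr => p _; rewrite -sumrB; apply: eq_bigr => q _.
rewrite !mxE; ring.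
Qed.

Lemma Lform (F : fieldType) d (op : 'rV[F]_d -> 'rV[F]_d -> 'rV[F]_d) (r : 'M[F]_d) :
  (forall z, lin (op ^~ z)) -> (forall z, lin (op z)) -> r^T = r ->
  forall i j k, PLYBE_L op (fun p => delta_mx 0 p) (fun p => row p r) i j k =
   op (row i r) (row j r) 0 k + op (row i r) (row k r) 0 j
   - (op (row j r) (row k r) 0 i + op (row k r) (row j r) 0 i).
Proof.
move=> H1 H2 Hs i j k; rewrite /PLYBE_L /t3 split3b sum_delta2 (mid_term H2 Hs).
congr (_ - _).
rewrite (expand2 H1 H2 Hs j k) (expand2 H1 H2 Hs k j) [X in _ = _ + X]exchange_big /=.
rewrite -big_split; apply: eq_bigr => p _; rewrite -big_split; apply: eq_bigr => q _.
rewrite /= !mxE; ring.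
Qed.

Lemma hat_circ_E (F : fieldType) n m (circ : 'rV[F]_n -> 'rV[F]_n -> 'rV[F]_n)
  (lc rc : 'rV[F]_n -> 'M[F]_m) X Y :
  hat_circ circ lc rc X Y = row_mx (circ (lsubmx X) (lsubmx Y))
    (rsubmx Y *m lc (lsubmx X) + rsubmx X *m (lc (lsubmx Y) - rc (lsubmx Y))).
Proof. by rewrite /hat_circ /dual_act !opprK mulmxBr. Qed.

Lemma hat_br_E (F : fieldType) n m (br : 'rV[F]_n -> 'rV[F]_n -> 'rV[F]_n)
  (lb rb : 'rV[F]_n -> 'M[F]_m) X Y :
  hat_br br lb rb X Y = row_mx (br (lsubmx X) (lsubmx Y))
    (- (rsubmx Y *m lb (lsubmx X)) + rsubmx X *m (lb (lsubmx Y) + rb (lsubmx Y))).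
Proof. by rewrite /hat_br /dual_act opprD !opprK mulmxDr. Qed.

Lemma hat_circ_lin1 (F : fieldType) n m (circ : 'rV[F]_n -> 'rV[F]_n -> 'rV[F]_n)
  (lc rc : 'rV[F]_n -> 'M[F]_m) :
  (forall z, lin (circ ^~ z)) -> lin lc ->
  forall Z, lin ((hat_circ circ lc rc) ^~ Z).
Proof.
move=> H1 Hl Z a X Y /=; rewrite !hat_circ_E !linearP /= H1 Hl.
rewrite scale_row_mx add_row_mx; congr row_mx.
rewrite mulmxDr mulmxDl -!scalemxAr -!scalemxAl scalerDr.
by rewrite addrACA.
Qed.

Lemma hat_circ_lin2 (F : fieldType) n m (circ : 'rV[F]_n -> 'rV[F]_n -> 'rV[F]_n)
  (lc rc : 'rV[F]_n -> 'M[F]_m) :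
  (forall z, lin (circ z)) -> lin lc -> lin rc ->
  forall Z, lin (hat_circ circ lc rc Z).
Proof.
move=> H2 Hl Hr Z a X Y /=; rewrite !hat_circ_E !linearP /= H2 Hl Hr.
rewrite scale_row_mx add_row_mx; congr row_mx.
rewrite opprD addrACA -scalerBr mulmxDr mulmxDl -!scalemxAr -!scalemxAl scalerDr.
by rewrite addrACA.
Qed.

Lemma hat_br_lin1 (F : fieldType) n m (br : 'rV[F]_n -> 'rV[F]_n -> 'rV[F]_n)
  (lb rb : 'rV[F]_n -> 'M[F]_m) :
  (forall z, lin (br ^~ z)) -> lin lb ->
  forall Z, lin ((hat_br br lb rb) ^~ Z).
Proof.
move=> H1 Hl Z a X Y /=; rewrite !hat_br_E !linearP /= H1 Hl.
rewrite scale_row_mx add_row_mx; congr row_mx.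
rewrite mulmxDr mulmxDl -!scalemxAr -!scalemxAl scalerDr opprD scalerN.
by rewrite addrACA.
Qed.

Lemma hat_br_lin2 (F : fieldType) n m (br : 'rV[F]_n -> 'rV[F]_n -> 'rV[F]_n)
  (lb rb : 'rV[F]_n -> 'M[F]_m) :
  (forall z, lin (br z)) -> lin lb -> lin rb ->
  forall Z, lin (hat_br br lb rb Z).
Proof.
move=> H2 Hl Hr Z a X Y /=; rewrite !hat_br_E !linearP /= H2 Hl Hr.
rewrite scale_row_mx add_row_mx; congr row_mx.
rewrite addrACA -scalerDr mulmxDr mulmxDl -!scalemxAr -!scalemxAl scalerDr opprD scalerN.
by rewrite addrACA.
Qed.


Lemma hcAA (F : fieldType) n m (circ : 'rV[F]_n -> 'rV[F]_n -> 'rV[F]_n)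
  (lc rc : 'rV[F]_n -> 'M[F]_m) x y :
  hat_circ circ lc rc (row_mx x 0) (row_mx y 0) = row_mx (circ x y) 0.
Proof. by rewrite hat_circ_E !row_mxKl !row_mxKr !mul0mx addr0. Qed.

Lemma hcAV (F : fieldType) n m (circ : 'rV[F]_n -> 'rV[F]_n -> 'rV[F]_n)
  (lc rc : 'rV[F]_n -> 'M[F]_m) x v : (forall z, lin (circ z)) ->
  hat_circ circ lc rc (row_mx x 0) (row_mx 0 v) = row_mx 0 (v *m lc x).
Proof. by move=> H2; rewrite hat_circ_E !row_mxKl !row_mxKr !mul0mx addr0 (lin0 (H2 x)). Qed.

Lemma hcVA (F : fieldType) n m (circ : 'rV[F]_n -> 'rV[F]_n -> 'rV[F]_n)
  (lc rc : 'rV[F]_n -> 'M[F]_m) u y : (forall z, lin (circ ^~ z)) ->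
  hat_circ circ lc rc (row_mx 0 u) (row_mx y 0) = row_mx 0 (u *m (lc y - rc y)).
Proof. by move=> H1; rewrite hat_circ_E !row_mxKl !row_mxKr !mul0mx add0r (lin0 (H1 y)). Qed.

Lemma hcVV (F : fieldType) n m (circ : 'rV[F]_n -> 'rV[F]_n -> 'rV[F]_n)
  (lc rc : 'rV[F]_n -> 'M[F]_m) u v : (forall z, lin (circ ^~ z)) -> lin lc -> lin rc ->
  hat_circ circ lc rc (row_mx 0 u) (row_mx 0 v) = row_mx 0 0.
Proof.
by move=> H1 Hl Hr; rewrite hat_circ_E !row_mxKl !row_mxKr (lin0 (H1 0)) (lin0 Hl) (lin0 Hr) subr0 !mulmx0 addr0.
Qed.

Lemma hbAA (F : fieldType) n m (br : 'rV[F]_n -> 'rV[F]_n -> 'rV[F]_n)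
  (lb rb : 'rV[F]_n -> 'M[F]_m) x y :
  hat_br br lb rb (row_mx x 0) (row_mx y 0) = row_mx (br x y) 0.
Proof. by rewrite hat_br_E !row_mxKl !row_mxKr !mul0mx oppr0 addr0. Qed.

Lemma hbAV (F : fieldType) n m (br : 'rV[F]_n -> 'rV[F]_n -> 'rV[F]_n)
  (lb rb : 'rV[F]_n -> 'M[F]_m) x v : (forall z, lin (br z)) ->
  hat_br br lb rb (row_mx x 0) (row_mx 0 v) = row_mx 0 (- (v *m lb x)).
Proof. by move=> H2; rewrite hat_br_E !row_mxKl !row_mxKr !mul0mx addr0 (lin0 (H2 x)). Qed.

Lemma hbVA (F : fieldType) n m (br : 'rV[F]_n -> 'rV[F]_n -> 'rV[F]_n)
  (lb rb : 'rV[F]_n -> 'M[F]_m) u y : (forall z, lin (br ^~ z)) ->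
  hat_br br lb rb (row_mx 0 u) (row_mx y 0) = row_mx 0 (u *m (lb y + rb y)).
Proof. by move=> H1; rewrite hat_br_E !row_mxKl !row_mxKr !mul0mx oppr0 add0r (lin0 (H1 y)). Qed.

Lemma hbVV (F : fieldType) n m (br : 'rV[F]_n -> 'rV[F]_n -> 'rV[F]_n)
  (lb rb : 'rV[F]_n -> 'M[F]_m) u v : (forall z, lin (br ^~ z)) -> lin lb -> lin rb ->
  hat_br br lb rb (row_mx 0 u) (row_mx 0 v) = row_mx 0 0.
Proof.
by move=> H1 Hl Hr; rewrite hat_br_E !row_mxKl !row_mxKr (lin0 (H1 0)) (lin0 Hl) (lin0 Hr) addr0 !mulmx0 oppr0 addr0.
Qed.

Lemma TtE (F : fieldType) n m (T : 'cV[F]_m -> 'rV[F]_n) i j :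
  T_tensor T i j = \sum_k (row_mx (T (delta_mx k 0)) (0:'rV_m) : 'rV_(n+m)) 0 i
                      * (row_mx (0:'rV_n) (delta_mx 0 k) : 'rV_(n+m)) 0 j.
Proof.
rewrite /T_tensor summxE; apply: eq_bigr => k _.
by rewrite /tensor2 mxE big_ord1 mxE.
Qed.

Lemma rsym (F : fieldType) n m (T : 'cV[F]_m -> 'rV[F]_n) :
  (T_tensor T + flip2 (T_tensor T))^T = T_tensor T + flip2 (T_tensor T).
Proof. by apply/matrixP => i j; rewrite !mxE addrC. Qed.

Definition tc (F : fieldType) n m (T : 'cV[F]_m -> 'rV[F]_n) (c : 'I_n) : 'rV[F]_m :=
  \row_l T (delta_mx l 0) 0 c.

Lemma rowL (F : fieldType) n m (T : 'cV[F]_m -> 'rV[F]_n) c :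
  row (lshift m c) (T_tensor T + flip2 (T_tensor T)) = row_mx 0 (tc T c).
Proof.
apply/rowP => j; rewrite !mxE !TtE.
case: (split_ordP j) => [b ->|a ->].
  by rewrite mxE !big1 ?addr0 // => k _; rewrite !row_mxEl mxE mulr0.
rewrite mxE addrC big1 ?add0r; last by move=> k _; rewrite row_mxEr mxE mul0r.
under eq_bigr do rewrite row_mxEl row_mxEr.
exact: sum_deltar.
Qed.

Lemma rowR (F : fieldType) n m (T : 'cV[F]_m -> 'rV[F]_n) a :
  row (rshift n a) (T_tensor T + flip2 (T_tensor T)) = row_mx (T (delta_mx a 0)) 0.
Proof.
apply/rowP => j; rewrite !mxE !TtE.
case: (split_ordP j) => [c ->|b ->].
  rewrite big1 ?add0r; last by move=> k _; rewrite row_mxEr mxE mul0r.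
  under eq_bigr do rewrite row_mxEl row_mxEr.
  exact: sum_deltar.
by rewrite mxE !big1 ?addr0 // => k _; rewrite !row_mxEr mxE mul0r.
Qed.

Lemma colsum (F : fieldType) m (w : 'cV[F]_m) : w = \sum_a w a 0 *: delta_mx a 0.
Proof.
rewrite {1}[w]matrix_sum_delta; apply: eq_bigr => a _; by rewrite big_ord1.
Qed.

Lemma Tc (F : fieldType) n m (T : 'cV[F]_m -> 'rV[F]_n) : lin T ->
  forall w c, T w 0 c = (tc T c *m w) 0 0.
Proof.
move=> HT w c; rewrite {1}[w]colsum (lin_sum HT) summxE !mxE.
by apply: eq_bigr => l _; rewrite !mxE mulrC.
Qed.

Lemma tcN (F : fieldType) n m (T : 'cV[F]_m -> 'rV[F]_n) : lin T ->
  forall (N : 'M[F]_m) b c, (tc T c *m N) 0 b = T (N *m delta_mx b 0) 0 c.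
Proof. by move=> HT N b c; rewrite (Tc HT) mulmxA -colE [RHS]mxE. Qed.

Lemma ext (F : fieldType) n m (op : 'rV[F]_n -> 'rV[F]_n -> 'rV[F]_n)
  (l r : 'rV[F]_n -> 'M[F]_m) (T : 'cV[F]_m -> 'rV[F]_n) :
  (forall z, lin (op ^~ z)) -> (forall z, lin (op z)) -> lin l -> lin r -> lin T ->
  (forall a b, op (T (delta_mx a 0)) (T (delta_mx b 0)) =
     T (l (T (delta_mx a 0)) *m delta_mx b 0 + r (T (delta_mx b 0)) *m delta_mx a 0)) ->
  forall u v, op (T u) (T v) = T (l (T u) *m v + r (T v) *m u).
Proof.
move=> H1 H2 Hl Hr HT Hb u v; apply/eqP; rewrite -subr_eq0; apply/eqP.
pose G u v := op (T u) (T v) - T (l (T u) *m v + r (T v) *m u).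
have G1 : forall v, lin (G ^~ v).
  move=> w a x y; rewrite /G HT H1 Hl mulmxDl mulmxDr -scalemxAl -scalemxAr.
  rewrite addrACA -scalerDr HT scalerBr opprD addrACA //.
have G2 : forall u, lin (G u).
  move=> w a x y; rewrite /G HT H2 Hr mulmxDl mulmxDr -scalemxAl -scalemxAr.
  rewrite addrACA -scalerDr HT scalerBr opprD addrACA //.
change (G u v = 0).
rewrite [u]colsum (lin_sum (G1 v)) big1 // => a _.
rewrite [v]colsum (lin_sum (G2 _)) big1 ?scaler0 // => b _.
by rewrite /G Hb subrr scaler0.
Qed.

Lemma mxNE (F : fieldType) p q (A : 'M[F]_(p,q)) i j : (- A) i j = - A i j.
Proof. by rewrite mxE. Qed.

Unset Implicit Arguments.
Set Strict Implicit.

Theorem theorem3p21 (F : fieldType) (n m : nat)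
  (circ br : 'rV[F]_n -> 'rV[F]_n -> 'rV[F]_n)
  (lc rc lb rb : 'rV[F]_n -> 'M[F]_m)
  (T : 'cV[F]_m -> 'rV[F]_n) :
  [pchar F] =i pred0 ->
  dual_prePoisson circ br ->
  is_rep circ br lc rc lb rb ->
  linear_map T ->
  (PLYBE_solution (hat_circ circ lc rc) (hat_br br lb rb)
     (T_tensor T + flip2 (T_tensor T))
   <-> O_operator circ br lc rc lb rb T).
Proof.
move=> _ [[c1 c2] [[b1 b2] _]] [[Hlc Hrc Hlb Hrb] _] HT0.
have C1 : forall z, lin (circ ^~ z) by move=> z a x y; exact: c1.
have C2 : forall z, lin (circ z) by move=> z a x y; exact: c2.
have B1 : forall z, lin (br ^~ z) by move=> z a x y; exact: b1.
have B2 : forall z, lin (br z) by move=> z a x y; exact: b2.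
have HT : lin T := HT0.
have Lc : lin lc := Hlc.
have Rc : lin rc := Hrc.
have Lb : lin lb := Hlb.
have Rb : lin rb := Hrb.
have Hs := rsym T.
have HC1 := hat_circ_lin1 rc C1 Lc.
have HC2 := hat_circ_lin2 C2 Lc Rc.
have HB1 := hat_br_lin1 rb B1 Lb.
have HB2 := hat_br_lin2 B2 Lb Rb.
rewrite /PLYBE_solution /=.
split.
- move=> HP.
  have key : forall a b, circ (T (delta_mx a 0)) (T (delta_mx b 0)) =
     T (lc (T (delta_mx a 0)) *m delta_mx b 0 + rc (T (delta_mx b 0)) *m delta_mx a 0) /\
     br (T (delta_mx a 0)) (T (delta_mx b 0)) =
     T (lb (T (delta_mx a 0)) *m delta_mx b 0 + rb (T (delta_mx b 0)) *m delta_mx a 0).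
    move=> a b; split; apply/rowP => c; have [P0 L0] := HP (rshift n a) (rshift n b) (lshift m c).
    + move: P0; rewrite (Pform HC1 HC2 Hs) ?rowL ?rowR ?hcAA ?hcAV ?hcVA ?hcVV // ?row_mxEl ?row_mxEr ?mxNE ?(tcN HT) ?mulmxBl ?mulmxDl ?(linB HT) ?(linD HT) ?mxE => P0.
      by apply/eqP; rewrite -subr_eq0; apply/eqP; rewrite -[RHS]P0; ring.
    + move: L0; rewrite (Lform HB1 HB2 Hs) ?rowL ?rowR ?hbAA ?hbAV ?hbVA ?hbVV // ?row_mxEl ?row_mxEr ?mxNE ?(tcN HT) ?mulmxBl ?mulmxDl ?(linB HT) ?(linD HT) ?mxE => L0.
      by apply/eqP; rewrite -subr_eq0; apply/eqP; rewrite -[RHS]L0; ring.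
  move=> u v; split.
  + apply: (ext C1 C2 Lc Rc HT) => a b; exact: (key a b).1.
  + apply: (ext B1 B2 Lb Rb HT) => a b; exact: (key a b).2.
- move=> HO.
  have kc := fun a b => (HO (delta_mx a 0) (delta_mx b 0)).1.
  have kb := fun a b => (HO (delta_mx a 0) (delta_mx b 0)).2.
  move=> i j k; rewrite (Pform HC1 HC2 Hs) (Lform HB1 HB2 Hs).
  case: (split_ordP i) => a ->; case: (split_ordP j) => b ->; case: (split_ordP k) => c ->;
  rewrite ?rowL ?rowR ?hcAA ?hcAV ?hcVA ?hcVV ?hbAA ?hbAV ?hbVA ?hbVV // ?row_mxEl ?row_mxEr ?mxNE ?(tcN HT) ?kc ?kb ?mulmxBl ?mulmxDl ?(linB HT) ?(linD HT) ?mxE; split; ring.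
Qed.
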